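(* Let $f:\mathbb{Z}\to\mathbb{R}$ be defined by $f(x)=\left|\sin\left(\frac{x+1}{100}\right)\right|$. Then $x=-1$ is the only global minimizer of $f$ on $\mathbb{Z}$; that is, $f(-1)=\min_{x\in\mathbb{Z}} f(x)$ and $f(x)>f(-1)$ for every integer $x\neq -1$. *)

(* Defs.v *)
From Stdlib Require Import Reals ZArith.
Open Scope R_scope.

Definition fsin (x : Z) : R := Rabs (sin ((IZR x + 1) / 100)).

(* Main.v *)
Require Import Defs.
From Stdlib Require Import Reals ZArith Lra.
Open Scope R_scope.
From mathcomp Require Import all_boot all_order all_algebra.
From mathcomp Require Import all_classical all_reals all_analysis.
From mathcomp Require Import Rstruct Rstruct_topology.
Import Order.TTheory GRing.Theory Num.Theory.

Local Open Scope ring_scope.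
Lemma RcosE (x : R) : Rtrigo_def.cos x = trigo.cos x.
Proof.
apply/esym; rewrite /Rtrigo_def.cos; case: exist_cos => y.
rewrite /cos_in /infinite_sum /= => cos_ub.
have H : (series (cos_coeff' x) @ \oo --> y)%classic.
  rewrite -cvg_shiftS /=. apply/(@pseudometric_normed_Zmodule.cvgrPdist_lt _ R^o) => /= e /RltP /cos_ub[N Nub].
  near=> n.
  have nN : (n >= N)%coq_nat by apply/ssrnat.leP; near: n; exact: nbhs_infty_ge.
  move: Nub => /(_ _ nN) /[!RdistE] /RltP /=.
  rewrite distrC sum_f_R0E; congr (`| _ - _ | < e).
  apply: eq_bigr=> k _; rewrite /cos_n /cos_coeff'.
  rewrite !RpowE RdivE RmultE INRE factE /Rsqr RmultE -expr2 -exprM mulrAC -mul2n.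
  by [].

have H2 := @cvg_cos_coeff' R x.
apply: (cvg_unique _ H2 H); exact: Rhausdorff.
Unshelve. all: by end_near. Qed.

Lemma PIE : PI = trigo.pi :> R.
Proof.
have h1 := PI2_1; have h2 := PI_4.
suff : PI / 2 = trigo.pi / 2 :> R.
  move=> h; have := congr1 (fun t => t * 2) h => /=.
  by rewrite !divfK.
apply: cos_02_uniq.
- apply/andP; split; apply/RleP.
  + change (0 <= PI / 2)%coqR; lra.
  + change (PI / 2 <= 2)%coqR; lra.
- rewrite -RcosE; change (Rtrigo_def.cos (PI / 2)%coqR = 0); exact: cos_PI2.
- by case: (@pihalf_02_cos_pihalf R).
- by case: (@pihalf_02_cos_pihalf R).
Qed.

Lemma IZR_int (z : Z) : exists a : int, IZR z = a%:~R.
Proof.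
case: z => [|p|p]; first by exists 0.
- by exists (Posz (nat_of_pos p)); rewrite IZRposE INRE.
- exists (- Posz (nat_of_pos p)); rewrite -Pos2Z.opp_pos opp_IZR IZRposE INRE.
  by rewrite mulrNz.
Qed.

Lemma PI_irr (n m : Z) : IZR m <> 0%coqR -> PI <> IZR n / IZR m.
Proof.
move=> m0 hpi; apply: (@pi_irrationnal R).
have [a ea] := IZR_int n; have [b eb] := IZR_int m.
exists (a%:~R / b%:~R) => //.
by rewrite fmorph_div /= !ratr_int -ea -eb -PIE hpi.
Qed.

Local Close Scope ring_scope.
Local Open Scope R_scope.
Delimit Scope Z_scope with Z.

Theorem theorem1 :
  (forall x : Z, fsin (-1)%Z <= fsin x) /\
  (forall x : Z, x <> (-1)%Z -> fsin (-1)%Z < fsin x).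
Proof.
have e0 : fsin (-1)%Z = 0.
  rewrite /fsin.
  replace ((IZR (-1) + 1) / 100) with 0 by (rewrite /Rdiv; lra).
  by rewrite sin_0 Rabs_R0.
rewrite e0; split => x; first by rewrite /fsin; apply: Rabs_pos.
move=> hx; rewrite /fsin; apply: Rabs_pos_lt => hs.
have [k hk] := sin_eq_0_0 _ hs.
have hx1 : IZR x + 1 <> 0.
  move=> h; apply: hx; apply: eq_IZR; lra.
have hk0 : IZR k <> 0.
  move=> h; rewrite h Rmult_0_l in hk; apply: hx1.
  have := Rmult_integral _ _ hk; case => //; move=> h'.
  have : / 100 <> 0 by apply: Rinv_neq_0_compat; lra.
  by [].
apply: (PI_irr (x + 1) (100 * k)).
  rewrite mult_IZR; apply: Rmult_integral_contrapositive_currified => //; lra.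
rewrite plus_IZR mult_IZR -RdivE.
replace (IZR x + 1) with (100 * (IZR k * PI)) by (rewrite -hk; field).
field; exact: hk0.
Qed.
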